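(* Let $k$ be a field of characteristic $0$ and let $F(X,Y), G(X,Y)\in k[X,Y]$ be such that the determinant of the Jacobian matrix $\begin{pmatrix}\partial F/\partial X & \partial F/\partial Y\\ \partial G/\partial X & \partial G/\partial Y\end{pmatrix}$ is a nonzero element of $k$. Then the system $$F(\mathcal{U}(t),\mathcal{V}(t))=tX+(1-t)F(X,Y),\qquad G(\mathcal{U}(t),\mathcal{V}(t))=tY+(1-t)G(X,Y),$$ with initial conditions $\mathcal{U}(0)=X$, $\mathcal{V}(0)=Y$, has a unique solution $\mathcal{U}(t),\mathcal{V}(t)\in k[X,Y][[t]]$.
   Context: $k[X,Y][[t]]$ denotes the ring of formal power series in $t$ with coefficients in $k[X,Y]$; for a power series, evaluation at $t=0$ means taking its constant term. *)

(* Defs.v *)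
From HB Require Import structures.
From mathcomp Require Import all_boot all_order all_algebra.
From mathcomp Require Import mpoly.
Set Implicit Arguments. Unset Strict Implicit. Unset Printing Implicit Defensive.
Import GRing.Theory.
Local Open Scope ring_scope.

(* Formal power series in t over a ring R, given by their coefficient
   sequences: U = \sum_n (U n) t^n.  We use R := k[X,Y] = {mpoly k[2]},
   with X = 'X_0 and Y = 'X_1. *)
Definition pseries (R : Type) := nat -> R.

Definition ptrunc (R : nzRingType) (n : nat) (U : pseries R) : {poly R} :=
  \poly_(i < n.+1) U i.

Definition ser_of_poly (R : nzRingType) (p : {poly R}) : pseries R :=
  fun n => p`_n.

Definition eval2poly (k : fieldType) (F : {mpoly k[2]})
    (a b : {poly {mpoly k[2]}}) : {poly {mpoly k[2]}} :=
  mmap (fun c : k => (c%:MP)%:P) (fun i : 'I_2 => if val i == 0%N then a else b) F.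

(* F(U(t), V(t)) for F in k[X,Y] and U, V in k[X,Y][[t]]: the n-th coefficient
   of the substitution only depends on U, V modulo t^(n+1). *)
Definition eval2 (k : fieldType) (F : {mpoly k[2]})
    (U V : pseries {mpoly k[2]}) : pseries {mpoly k[2]} :=
  fun n => (eval2poly F (ptrunc n U) (ptrunc n V))`_n.

Definition jacdet (k : fieldType) (F G : {mpoly k[2]}) : {mpoly k[2]} :=
  F^`M(0) * G^`M(1) - F^`M(1) * G^`M(0).

(* Main.v *)
Require Import Defs.
From HB Require Import structures.
From mathcomp Require Import all_boot all_order all_algebra.
From mathcomp Require Import mpoly.
From mathcomp Require Import ring.
From Stdlib Require Import FunctionalExtensionality.
Import GRing.Theory.
Local Open Scope ring_scope.

Lemma auxM (T : comRingType) (A B C D X : T) :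
  (A + X * B) * (C + X * D) = A * C + X * (B * (C + X * D) + A * D).
Proof. ring. Qed.
Lemma auxM2 (T : comRingType) (p0 p1 q0 q1 p q u v : T) :
  (p0 * u + p1 * v) * q + p * (q0 * u + q1 * v) = (p0 * q + p * q0) * u + (p1 * q + p * q1) * v.
Proof. ring. Qed.

Section Aux.
Variable k : fieldType.
Local Notation R := {mpoly k[2]}.

Definition cst : {rmorphism k -> {poly R}} := (@polyC R \o @mpolyC 2 k)%FUN.

Lemma e2E (F : R) a b :
  eval2poly F a b = mmap cst (fun i : 'I_2 => if val i == 0%N then a else b) F.
Proof. by []. Qed.
Lemma e2M (F G : R) a b : eval2poly (F * G) a b = eval2poly F a b * eval2poly G a b.
Proof. by rewrite !e2E rmorphM. Qed.
Lemma e2D (F G : R) a b : eval2poly (F + G) a b = eval2poly F a b + eval2poly G a b.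
Proof. by rewrite !e2E rmorphD. Qed.
Lemma e2C (c : k) (a b : {poly R}) : eval2poly (c%:MP : R) a b = (c%:MP)%:P.
Proof. by rewrite !e2E mmapC. Qed.
Lemma e2X0 (a b : {poly R}) : @eval2poly k 'X_0 a b = a.
Proof. by rewrite !e2E /mpolyX mmapX mmap1U. Qed.
Lemma e2X1 (a b : {poly R}) : @eval2poly k 'X_1 a b = b.
Proof. by rewrite !e2E /mpolyX mmapX mmap1U. Qed.

Local Opaque eval2poly.

Lemma mpoly2_ind (P : R -> Prop) :
  (forall c, P c%:MP) -> P 'X_0 -> P 'X_1 ->
  (forall p q, P p -> P q -> P (p + q)) ->
  (forall p q, P p -> P q -> P (p * q)) -> forall p, P p.
Proof.
move=> HC H0 H1 HD HM p; elim/mpolyind: p.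
  by have := HC 0; rewrite raddf0.
move=> c m p _ _ Hp; apply: (HD) => //.
rewrite -mul_mpolyC; apply: (HM) => //.
rewrite mpolyXE_id; apply: (big_ind P) => //.
  by have := HC 1; rewrite mpolyC1.
move=> i _.
have HX : P 'X_i.
  have [->|->] : i = 0 \/ i = 1 by case: i => [[|[|//]] Hi]; [left|right]; apply/val_inj.
    by [].
  by [].
move: (m i) => e; elim: e => [|e IH]; first by have := HC 1; rewrite mpolyC1 expr0.
by rewrite exprS; apply: (HM).
Qed.

Lemma dX (i j : 'I_2) : (('X_i : R)^`M(j)) = if i == j then 1 else 0.
Proof.
rewrite /mpolyX mderivX mnm1E; case: eqP => [->|_]; last by rewrite scale0r.
have -> : (U_(j) - U_(j))%MM = 0%MM by apply/mnmP => l; rewrite mnmBE subnn mnm0E.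
by rewrite mpolyX0 scale1r.
Qed.

Lemma auxM' (A B C D X : {poly R}) :
  (A + X * B) * (C + X * D) = A * C + X * (B * (C + X * D) + A * D).
Proof. exact: auxM. Qed.

Lemma stepM (p q u v A B : R) : A = q -> B = p ->
  (p^`M(0) * u + p^`M(1) * v) * A + B * (q^`M(0) * u + q^`M(1) * v) =
  (p^`M(0) * q + p * q^`M(0)) * u + (p^`M(1) * q + p * q^`M(1)) * v.
Proof. move=> -> ->; exact: auxM2. Qed.

Lemma eval0 (F : R) (a b : {poly R}) : a`_0 = 'X_0 -> b`_0 = 'X_1 -> (eval2poly F a b)`_0 = F.
Proof.
move=> Ha Hb; elim/mpoly2_ind: F => [c|||p q Hp Hq|p q Hp Hq].
- rewrite e2C coefC /=; reflexivity.
- rewrite e2X0; exact: Ha.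
- rewrite e2X1; exact: Hb.
- rewrite e2D coefD; congr (_ + _); [exact: Hp | exact: Hq].
- rewrite e2M coef0M; congr (_ * _); [exact: Hp | exact: Hq].
Qed.

Lemma keyInv n (a b : {poly R}) (u v : R) : (0 < n)%N -> a`_0 = 'X_0 -> b`_0 = 'X_1 ->
  forall F : R, exists Q, eval2poly F (a + u *: 'X^n) (b + v *: 'X^n)
     = eval2poly F a b + 'X^n * Q /\ Q`_0 = F^`M(0) * u + F^`M(1) * v.
Proof.
move=> Hn Ha Hb F; elim/mpoly2_ind: F => [c|||p q [Q1 [E1 H1]] [Q2 [E2 H2]]|p q [Q1 [E1 H1]] [Q2 [E2 H2]]].
- exists 0; rewrite !e2C mulr0 addr0 coef0 !mderivC; split; first reflexivity.
  by rewrite !mul0r addr0.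
- exists u%:P; rewrite !e2X0 -mul_polyC [u%:P * _]mulrC coefC /= !dX /=; split; first reflexivity.
  by rewrite mul1r mul0r addr0.
- exists v%:P; rewrite !e2X1 -mul_polyC [v%:P * _]mulrC coefC /= !dX /=; split; first reflexivity.
  by rewrite mul1r mul0r add0r.
- exists (Q1 + Q2); rewrite !e2D E1 E2 coefD H1 H2 !mderivD; split.
    by rewrite mulrDr addrACA.
  by rewrite !mulrDl addrACA.
- exists (Q1 * (eval2poly q a b + 'X^n * Q2) + eval2poly p a b * Q2).
  rewrite !e2M E1 E2; split; first exact: auxM'.
  rewrite coefD !coef0M coefD coefXnM Hn addr0 H1 H2 !mderivM. exact: stepM (eval0 q a b Ha Hb) (eval0 p a b Ha Hb).
Qed.

Lemma ptrunc0 (U : pseries R) : ptrunc 0 U = (U 0%N)%:P.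
Proof.
apply/polyP => i; rewrite coef_poly coefC; case: i => [|i] //.
Qed.

Lemma ptruncS n (U : pseries R) : ptrunc n.+1 U = ptrunc n U + U n.+1 *: 'X^(n.+1).
Proof.
apply/polyP => i; rewrite coefD coefZ coefXn !coef_poly.
rewrite [(i < n.+2)%N]ltnS leq_eqVlt; case: eqP => [->|Hne] /=.
  by rewrite ltnn mulr1 add0r.
by rewrite mulr0 addr0.
Qed.

Lemma coef_ptrunc n (U : pseries R) : (ptrunc n U)`_n = U n.
Proof. by rewrite coef_poly ltnSn. Qed.
Lemma coef_ptrunc0 n (U : pseries R) : (ptrunc n U)`_0 = U 0%N.
Proof. by rewrite coef_poly. Qed.
Lemma coef_ptruncS n (U : pseries R) : (ptrunc n U)`_n.+1 = 0.
Proof. by rewrite coef_poly ltnn. Qed.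

Lemma coefXnS (A Q : {poly R}) m (D : R) : Q`_0 = D -> (A + 'X^m * Q)`_m = A`_m + D.
Proof. by move=> <-; rewrite coefD coefXnM ltnn subnn. Qed.

Lemma evalS (F : R) (U V : pseries R) n : U 0%N = 'X_0 -> V 0%N = 'X_1 ->
  eval2 F U V n.+1 = (eval2poly F (ptrunc n U) (ptrunc n V))`_n.+1
                      + (F^`M(0) * U n.+1 + F^`M(1) * V n.+1).
Proof.
move=> HU HV; rewrite /eval2 !ptruncS.
have Ha : (ptrunc n U)`_0 = 'X_0 by rewrite coef_ptrunc0.
have Hb : (ptrunc n V)`_0 = 'X_1 by rewrite coef_ptrunc0.
have [Q [E HQ]] := keyInv n.+1 (ptrunc n U) (ptrunc n V) (U n.+1) (V n.+1) (ltn0Sn n) Ha Hb F.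
rewrite E. apply: coefXnS; exact: HQ.
Qed.

End Aux.

Lemma rhs0_gen (T : nzRingType) (A Z : T) : ser_of_poly ('X * Z%:P + (1 - 'X) * A%:P) 0%N = A.
Proof.
rewrite /ser_of_poly coefD !coef0M coefB coef1 coefX !coefC eqxx /=.
by rewrite mul0r add0r subr0 mul1r.
Qed.

Section T.
Variable k : fieldType.
Local Notation R := {mpoly k[2]}.

Lemma solve_sum (A B C : R) : A + B = C -> B = C - A.
Proof. by move<-; rewrite addrAC subrr add0r. Qed.

Lemma L1 (T : comRingType) (fx fy gx gy ci x y : T) :
  ci * (gy * (fx * x + fy * y) - fy * (gx * x + gy * y)) = ci * ((fx * gy - fy * gx) * x).
Proof. ring. Qed.
Lemma L2 (T : comRingType) (fx fy gx gy ci x y : T) :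
  ci * (fx * (gx * x + gy * y) - gx * (fx * x + fy * y)) = ci * ((fx * gy - fy * gx) * y).
Proof. ring. Qed.
Lemma L3 (T : comRingType) (fx fy gx gy ci e1 e2 : T) :
  fx * (ci * (gy * e1 - fy * e2)) + fy * (ci * (fx * e2 - gx * e1)) = ci * ((fx * gy - fy * gx) * e1).
Proof. ring. Qed.
Lemma L4 (T : comRingType) (fx fy gx gy ci e1 e2 : T) :
  gx * (ci * (gy * e1 - fy * e2)) + gy * (ci * (fx * e2 - gx * e1)) = ci * ((fx * gy - fy * gx) * e2).
Proof. ring. Qed.

Lemma solve_iff (fx fy gx gy : R) (c : k) (x y e1 e2 : R) :
  fx * gy - fy * gx = c%:MP -> c != 0 ->
  (fx * x + fy * y = e1 /\ gx * x + gy * y = e2) <->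
  (x = (c^-1)%:MP * (gy * e1 - fy * e2) /\ y = (c^-1)%:MP * (fx * e2 - gx * e1)).
Proof.
move=> HJ Hc.
have Hci : forall z : R, (c^-1)%:MP * (c%:MP * z) = z.
  by move=> z; rewrite mulrA -mpolyCM mulVf // mpolyC1 mul1r.
split.
- case=> <- <-; split.
    by rewrite L1 HJ Hci.
  by rewrite L2 HJ Hci.
- case=> -> ->; split.
    by rewrite L3 HJ Hci.
  by rewrite L4 HJ Hci.
Qed.

Lemma sum_iff (A B C : R) : A + B = C <-> B = C - A.
Proof.
split; first exact: solve_sum.
by move=> ->; rewrite addrC subrK.
Qed.
End T.

Lemma coefC0 (T : nzRingType) (x : T) : (x%:P)`_0 = x.
Proof. by rewrite coefC. Qed.

Lemma coefXnZ (T : nzRingType) (A : {poly T}) (s : T) m : A`_m = 0 -> (A + s *: 'X^m)`_m = s.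
Proof. by move=> H; rewrite coefD coefZ coefXn eqxx mulr1 H add0r. Qed.

Section Main.
Variable k : fieldType.
Local Notation R := {mpoly k[2]}.
Variables (F G : R) (c : k) (rF rG : pseries R).

Definition stepuv (p : {poly R} * {poly R}) (m : nat) : R * R :=
  let eF := rF m - (eval2poly F p.1 p.2)`_m in
  let eG := rG m - (eval2poly G p.1 p.2)`_m in
  ((c^-1)%:MP * (G^`M(1) * eF - F^`M(1) * eG), (c^-1)%:MP * (F^`M(0) * eG - G^`M(0) * eF)).

Fixpoint uv (n : nat) : {poly R} * {poly R} :=
  match n with
  | 0 => (('X_0)%:P, ('X_1)%:P)
  | n'.+1 => let p := uv n' in let s := stepuv p n'.+1 in
      (p.1 + s.1 *: 'X^(n'.+1), p.2 + s.2 *: 'X^(n'.+1))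
  end.

Lemma uvS n : uv n.+1 = ((uv n).1 + (stepuv (uv n) n.+1).1 *: 'X^(n.+1),
                         (uv n).2 + (stepuv (uv n) n.+1).2 *: 'X^(n.+1)).
Proof. reflexivity. Qed.

Hypothesis Hc : c != 0.
Hypothesis HJ : jacdet F G = c%:MP.

Lemma eqn_step (U V : pseries R) n : U 0%N = 'X_0 -> V 0%N = 'X_1 ->
  ptrunc n U = (uv n).1 -> ptrunc n V = (uv n).2 ->
  (eval2 F U V n.+1 = rF n.+1 /\ eval2 G U V n.+1 = rG n.+1) <->
  (U n.+1 = (stepuv (uv n) n.+1).1 /\ V n.+1 = (stepuv (uv n) n.+1).2).
Proof.
move=> H0 H1 TU TV.
rewrite (@evalS k F U V n H0 H1) (@evalS k G U V n H0 H1) TU TV.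
have HJ' := HJ; rewrite /jacdet in HJ'.
have S := @solve_iff k _ _ _ _ c (U n.+1) (V n.+1)
  (rF n.+1 - (eval2poly F (uv n).1 (uv n).2)`_n.+1)
  (rG n.+1 - (eval2poly G (uv n).1 (uv n).2)`_n.+1) HJ' Hc.
split.
- case=> /solve_sum E1 /solve_sum E2; exact: (proj1 S (conj E1 E2)).
- move=> E; have [E1 E2] := proj2 S E; split; apply/sum_iff; [exact: E1 | exact: E2].
Qed.

Lemma step_of_trunc (U V : pseries R) :
  (forall n, ptrunc n U = (uv n).1 /\ ptrunc n V = (uv n).2) ->
  forall n, U n.+1 = (stepuv (uv n) n.+1).1 /\ V n.+1 = (stepuv (uv n) n.+1).2.
Proof.
move=> T n; have [T1 T2] := T n.+1; have [S1 S2] := T n.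
rewrite uvS in T1 T2; split.
- rewrite -(@coef_ptrunc k n.+1 U) T1; apply: coefXnZ.
  rewrite -S1; exact: coef_ptruncS.
- rewrite -(@coef_ptrunc k n.+1 V) T2; apply: coefXnZ.
  rewrite -S2; exact: coef_ptruncS.
Qed.

Definition Usol : pseries R := fun n => (uv n).1`_n.
Definition Vsol : pseries R := fun n => (uv n).2`_n.

Lemma trunc_uv n : ptrunc n Usol = (uv n).1 /\ ptrunc n Vsol = (uv n).2.
Proof.
elim: n => [|n [IH1 IH2]].
  by rewrite !ptrunc0; split; congr (_%:P); exact: coefC0.
have E1 : Usol n.+1 = (stepuv (uv n) n.+1).1.
  rewrite /Usol uvS; apply: coefXnZ; rewrite -IH1; exact: coef_ptruncS.
have E2 : Vsol n.+1 = (stepuv (uv n) n.+1).2.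
  rewrite /Vsol uvS; apply: coefXnZ; rewrite -IH2; exact: coef_ptruncS.
rewrite !ptruncS IH1 IH2 E1 E2 uvS; split; reflexivity.
Qed.


Lemma main_gen : rF 0%N = F -> rG 0%N = G ->
  exists! UV : pseries R * pseries R,
    [/\ UV.1 0%N = 'X_0, UV.2 0%N = 'X_1, eval2 F UV.1 UV.2 = rF & eval2 G UV.1 UV.2 = rG].
Proof.
move=> h0F h0G.
have HU0 : Usol 0%N = 'X_0 by exact: coefC0.
have HV0 : Vsol 0%N = 'X_1 by exact: coefC0.
exists (Usol, Vsol); split.
  split; [exact: HU0 | exact: HV0 | |].
  - apply: functional_extensionality => -[|n].
      rewrite h0F; apply: (@eval0 k F); rewrite coef_ptrunc0; [exact: HU0 | exact: HV0].
    have [T1 T2] := trunc_uv n.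
    have := proj2 (eqn_step Usol Vsol n HU0 HV0 T1 T2) (step_of_trunc Usol Vsol trunc_uv n).
    by case.
  - apply: functional_extensionality => -[|n].
      rewrite h0G; apply: (@eval0 k G); rewrite coef_ptrunc0; [exact: HU0 | exact: HV0].
    have [T1 T2] := trunc_uv n.
    have := proj2 (eqn_step Usol Vsol n HU0 HV0 T1 T2) (step_of_trunc Usol Vsol trunc_uv n).
    by case.
move=> [U' V'] /= [H0 H1 EF EG].
have T' : forall n, ptrunc n U' = (uv n).1 /\ ptrunc n V' = (uv n).2.
  elim=> [|n [IH1 IH2]].
    rewrite !ptrunc0 H0 H1; split; reflexivity.
  have [E1 E2] := proj1 (eqn_step U' V' n H0 H1 IH1 IH2)
    (conj (congr1 (fun f => f n.+1) EF) (congr1 (fun f => f n.+1) EG)).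
  rewrite !ptruncS IH1 IH2 E1 E2 uvS; split; reflexivity.
congr pair; apply: functional_extensionality => n.
  rewrite /Usol -(proj1 (T' n)); exact: coef_ptrunc.
rewrite /Vsol -(proj2 (T' n)); exact: coef_ptrunc.
Qed.
End Main.

Theorem theorem3p2 (k : fieldType) (Hchar : [pchar k] =i pred0)
    (F G : {mpoly k[2]})
    (HJ : exists c : k, c != 0 /\ jacdet F G = c%:MP) :
  exists! UV : pseries {mpoly k[2]} * pseries {mpoly k[2]},
    [/\ UV.1 0%N = 'X_0, UV.2 0%N = 'X_1,
        eval2 F UV.1 UV.2 = ser_of_poly ('X * ('X_0)%:P + (1 - 'X) * F%:P)
      & eval2 G UV.1 UV.2 = ser_of_poly ('X * ('X_1)%:P + (1 - 'X) * G%:P)].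
Proof.
have [c [Hc HJc]] := HJ.
apply: (main_gen _ F G c _ _ Hc HJc); exact: rhs0_gen.
Qed.
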